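(* Let $\Lambda$ be a row-finite $k$-graph with no sources. (1) If $\Lambda$ is strongly connected then $\Lambda$ is cofinal. (2) If $\Lambda$ is cofinal, has no sinks and $\Lambda^0$ is finite, then $\Lambda$ is strongly connected.
   Context: A $k$-graph is a countable category $\Lambda$ with a functor $d:\Lambda\to\mathbb{N}^k$ with unique factorisation; $\Lambda^n=d^{-1}(n)$, $\Lambda^0$ = vertices, $uXv=\{\lambda\in X:r(\lambda)=u,s(\lambda)=v\}$. Row-finite: $v\Lambda^n$ finite; no sources: $v\Lambda^n\ne\emptyset$ for $n\ne0$; no sinks: $\Lambda^nv\ne\emptyset$ for $n\ne0$. For $N\in\mathbb{N}^k$, $N>0$ means $N_i>0$ for all $i$. $\Lambda$ is strongly connected if for all $u,v\in\Lambda^0$ there is $N>0$ with $u\Lambda^Nv\ne\emptyset$. $\Lambda$ is cofinal if for all $v,w\in\Lambda^0$ there is $N\in\mathbb{N}^k$ such that $v\Lambda s(\alpha)\ne\emptyset$ for every $\alpha\in w\Lambda^N$. *)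

(* Defs.v *)
From Stdlib Require Import List.
From mathcomp Require Import all_boot.
Set Implicit Arguments. Unset Strict Implicit. Unset Printing Implicit Defensive.

(* Elements of N^k are functions 'I_k -> nat, compared pointwise. *)
Definition degk (k : nat) := 'I_k -> nat.

(* A k-graph: a countable category (objects [vtx], morphisms [mor], range [r],
   source [s], identities [idm], composition [comp lam mu] = lam mu, defined
   (meaningfully) when s lam = r mu) with a degree functor d : mor -> N^k
   having the unique factorisation property. *)
Record kgraph (k : nat) := KGraph {
  vtx : Type;
  mor : Type;
  r : mor -> vtx;
  s : mor -> vtx;
  idm : vtx -> mor;
  comp : mor -> mor -> mor;
  d : mor -> degk k;
  vtx_countable : exists f : vtx -> nat, injective f;
  mor_countable : exists f : mor -> nat, injective f;
  r_idm : forall v, r (idm v) = v;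
  s_idm : forall v, s (idm v) = v;
  r_comp : forall l m, s l = r m -> r (comp l m) = r l;
  s_comp : forall l m, s l = r m -> s (comp l m) = s m;
  comp_idl : forall l, comp (idm (r l)) l = l;
  comp_idr : forall l, comp l (idm (s l)) = l;
  compA : forall l m n, s l = r m -> s m = r n ->
      comp l (comp m n) = comp (comp l m) n;
  d_idm : forall v i, d (idm v) i = 0;
  d_comp : forall l m, s l = r m -> forall i, d (comp l m) i = d l i + d m i;
  factorisation : forall l (m n : degk k), (forall i, d l i = m i + n i) ->
      exists mu nu, [/\ s mu = r nu, (forall i, d mu i = m i),
                        (forall i, d nu i = n i) & comp mu nu = l];
  factorisation_uniq : forall mu nu mu' nu',
      s mu = r nu -> s mu' = r nu' ->
      (forall i, d mu i = d mu' i) -> (forall i, d nu i = d nu' i) ->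
      comp mu nu = comp mu' nu' -> mu = mu' /\ nu = nu'
}.

Section KGraphProps.
Variables (k : nat) (L : kgraph k).

Definition has_degree (l : mor L) (n : degk k) := forall i, d l i = n i.
Definition deg_zero (n : degk k) := forall i, n i = 0.
Definition deg_pos (n : degk k) := forall i, 0 < n i.

Definition row_finite :=
  forall (v : vtx L) (n : degk k), exists sq : seq (mor L),
    forall l, r l = v -> has_degree l n -> List.In l sq.

Definition no_sources :=
  forall (v : vtx L) (n : degk k), ~ deg_zero n ->
    exists l, r l = v /\ has_degree l n.

Definition no_sinks :=
  forall (v : vtx L) (n : degk k), ~ deg_zero n ->
    exists l, s l = v /\ has_degree l n.

Definition finite_vertices := exists sq : seq (vtx L), forall v, List.In v sq.

Definition strongly_connected :=
  forall u v : vtx L, exists N : degk k, deg_pos N /\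
    exists l, [/\ r l = u, s l = v & has_degree l N].

Definition cofinal :=
  forall v w : vtx L, exists N : degk k,
    forall alpha, r alpha = w -> has_degree alpha N ->
      exists l, r l = v /\ s l = s alpha.

End KGraphProps.

(* Main.v *)
Require Import Defs.
From mathcomp Require Import all_boot.
From Stdlib Require Import Lia.
From mathcomp Require Import zify.

Lemma bound_list (k : nat) (L : kgraph k) (P : vtx L -> degk k -> Prop) :
  (forall w, exists N, P w N) -> forall sq : seq (vtx L),
  exists B : degk k, forall w, List.In w sq -> exists N, P w N /\ forall i, N i <= B i.
Proof.
move=> H; elim=> [|a sq [B HB]].
  by exists (fun _ => 0) => w [].
have [N HN] := H a.
exists (fun i => N i + B i) => w [<-|Hw].
  by exists N; split => // i; apply: leq_addr.
have [M [HM1 HM2]] := HB w Hw.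
exists M; split => // i; apply: leq_trans (HM2 i) _; apply: leq_addl.
Qed.

Theorem proposition4p5 (k : nat) (L : kgraph k) :
  row_finite L -> no_sources L ->
  (strongly_connected L -> cofinal L) /\
  (cofinal L -> no_sinks L -> finite_vertices L -> strongly_connected L).
Proof.
move=> _ _; split.
  move=> SC v w; exists (fun _ => 0) => alpha _ _.
  have [N [_ [l [H1 H2 _]]]] := SC v (s alpha).
  by exists l.
move=> CF NS [sq Hsq] u v.
destruct k as [|k].
  exists (fun _ => 0); split; first by case.
  have [N HN] := CF u v.
  have [l [H1 H2]] := HN (idm v) (r_idm _) (fun i => match i with Ordinal m Hm => False_rect _ (notF Hm) end).
  exists l; split => //; first by rewrite H2 s_idm.
  by case.
have [B HB] := @bound_list _ L _ (CF u) sq.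
pose K : degk k.+1 := fun i => B i + 1.
have [beta [Hsb Hdb]] : exists l, s l = v /\ has_degree l K.
  apply: NS => Hz; have := Hz ord0; rewrite /K addn1 //.
have [N [HN HNB]] := HB (r beta) (Hsq _).
have Hdec : forall i, d beta i = N i + (K i - N i).
  move=> i; rewrite Hdb /K; have := HNB i; move: (N i) (B i) => a b; lia.
have [mu [nu [Hmn Hdmu Hdnu Hc]]] := factorisation Hdec.
have Hrmu : r mu = r beta by rewrite -Hc r_comp.
have [l0 [Hl0r Hl0s]] := HN mu Hrmu Hdmu.
have Hl0nu : s l0 = r nu by rewrite Hl0s.
exists (fun i => d (Defs.comp l0 nu) i); split.
  rewrite /deg_pos => i; rewrite (d_comp Hl0nu) Hdnu /K; have := HNB i; lia.
exists (Defs.comp l0 nu); split => //.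
  by rewrite r_comp.
by rewrite s_comp // -Hsb -Hc s_comp.
Qed.
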